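(* Let $n\geq 2$ and fix $I\sqcup J=[2,n]$. There is at most one $\sigma\in S_n$ such that $A^\sigma_{[2,n],\emptyset}=A^{\mathrm{id}}_{I,J}$.
   Context: Let $w_{ij}$, $1\leq i,j\leq n$, be formal variables subject only to $w_{ij}+w_{ji}=0$. Let $[2,n]=\{2,\dots,n\}$. For $\sigma\in S_n$ and a disjoint decomposition $I\sqcup J=[2,n]$, set $$A^\sigma_{I,J}:=\sum_{i\in I}\sum_{\ell=1}^{i-1}w_{\sigma(\ell)\sigma(i)}-\sum_{j\in J}\sum_{\ell=1}^{j-1}w_{\sigma(\ell)\sigma(j)}.$$ *)

(* Defs.v *)
From mathcomp Require Import all_boot all_order all_algebra all_fingroup.
Set Implicit Arguments. Unset Strict Implicit. Unset Printing Implicit Defensive.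
Import GRing.Theory.
Local Open Scope ring_scope.

(* Indices 1..n of the paper are represented 0-based by 'I_n.
   An element of the abelian group generated by the w_ab subject to
   w_ab + w_ba = 0 is represented by its antisymmetric coefficient function
   c : 'I_n -> 'I_n -> int; the generator w_ab (a <> b) is the function
   (x,y) |-> [x=a,y=b] - [x=b,y=a].  (Only w_ab with a <> b occur below.) *)
Definition wgen (n : nat) (a b : 'I_n) : 'I_n -> 'I_n -> int :=
  fun x y => ((x == a) && (y == b))%:R - ((x == b) && (y == a))%:R.

(* A^sigma_{I,J}, as a coefficient function.  Position i (1-based) is the
   ordinal i-1; sum over l = 1..i-1 becomes l < i (0-based). *)
Definition Acoef (n : nat) (s : 'S_n) (I J : {set 'I_n}) : 'I_n -> 'I_n -> int :=
  fun x y =>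
    \sum_(i in I) \sum_(l < n | (l < i)%N) wgen (s l) (s i) x y
  - \sum_(j in J) \sum_(l < n | (l < j)%N) wgen (s l) (s j) x y.

Definition pos2n (n : nat) : {set 'I_n} := [set i : 'I_n | (0 < i)%N].

(* Main.v *)
Require Import Defs.
From mathcomp Require Import all_boot all_order all_algebra all_fingroup.
Import GRing.Theory.
Local Open Scope ring_scope.
Lemma card_lt n k (hk : (k <= n)%N) : #|[set p : 'I_n | (p < k)%N]| = k.
Proof.
have E : [set p : 'I_n | (p < k)%N] = widen_ord hk @: setT.
  apply/setP=> p; rewrite inE; apply/idP/imsetP => [pk|[q _ ->]]; last exact: (ltn_ord q).
  by exists (Ordinal pk) => //; apply/val_inj.
rewrite E card_imset ?cardsT ?card_ord //. move=> a b /(congr1 val) /= ab. exact: val_inj.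
Qed.
Lemma card_perm_lt n (u : 'S_n) (x : 'I_n) : #|[set y | (u y < u x)%N]| = u x.
Proof.
rewrite -[RHS](@card_lt _ _ (ltnW (ltn_ord (u x)))) -(card_preimset [set p : 'I_n | (p < u x)%N] (@perm_inj _ u)).
by apply: eq_card => y; rewrite !inE.
Qed.

Lemma perm_eqV n (s : 'S_n) l x : (s l == x) = (l == s^-1%g x).
Proof. by apply/eqP/eqP => [<-|->]; rewrite ?permK ?permKV. Qed.

Lemma sum_ind n (a b : 'I_n) :
  \sum_(i : 'I_n) \sum_(l < n | (l < i)%N) ((l == a) && (i == b))%:R
  = ((a < b)%N)%:R :> int.
Proof.
rewrite (bigD1 b) //= [X in _ + X]big1 ?addr0; last first.
  by move=> i ib; rewrite big1 // => l _; rewrite (negbTE ib) andbF.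
under eq_bigr do rewrite eqxx andbT.
case: ltnP => ab.
  rewrite (bigD1 a) //= eqxx big1 ?addr0 // => l /andP[_ /negbTE ->] //.
by rewrite big1 // => l lb; case: eqP => // la; move: lb; rewrite la ltnNge ab.
Qed.

Lemma key n (s : 'S_n) x y : Acoef s (pos2n n) set0 x y =
  ((s^-1%g x < s^-1%g y)%N)%:R - ((s^-1%g y < s^-1%g x)%N)%:R.
Proof.
rewrite /Acoef big_set0 subr0.
rewrite big_mkcond /=.
rewrite (eq_bigr (fun i : 'I_n => \sum_(l < n | (l < i)%N) wgen (s l) (s i) x y)); last first.
  move=> i _; rewrite inE; case: ifP => // /negbT; rewrite -leqNgt leqn0 => /eqP i0.
  by rewrite big_pred0 // => l; rewrite i0.
rewrite /wgen.
under eq_bigr do rewrite sumrB.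
rewrite sumrB.
under eq_bigr do under eq_bigr do rewrite (eq_sym x) (eq_sym y) !perm_eqV.
rewrite sum_ind.
under eq_bigr do under eq_bigr do rewrite (eq_sym x) (eq_sym y) !perm_eqV andbC.
by rewrite sum_ind.
Qed.

Lemma bool4 (a b c d : bool) : ~~ (a && b) -> ~~ (c && d) ->
  a%:R - b%:R = c%:R - d%:R :> int -> a = c.
Proof. by case: a; case: b; case: c; case: d. Qed.

Theorem lemma3p7 (n : nat) (hn : (2 <= n)%N) (I J : {set 'I_n})
    (hdisj : [disjoint I & J]) (hcov : I :|: J = pos2n n) :
  forall s t : 'S_n,
    (forall x y, Acoef s (pos2n n) set0 x y = Acoef 1 I J x y) ->
    (forall x y, Acoef t (pos2n n) set0 x y = Acoef 1 I J x y) ->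
    s = t.
Proof.
move=> s t hs ht.
have E x y : (s^-1%g x < s^-1%g y)%N = (t^-1%g x < t^-1%g y)%N.
  apply: (@bool4 _ (s^-1%g y < s^-1%g x)%N _ (t^-1%g y < t^-1%g x)%N).
  - by apply/negP => /andP[h1 h2]; move: (ltn_trans h1 h2); rewrite ltnn.
  - by apply/negP => /andP[h1 h2]; move: (ltn_trans h1 h2); rewrite ltnn.
  by rewrite -!key hs ht.
apply: invg_inj; apply/permP => x.
apply: val_inj; rewrite /= -(@card_perm_lt _ (s^-1)%g x) -(@card_perm_lt _ (t^-1)%g x).
by apply: eq_card => y; rewrite !inE E.
Qed.
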